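(* Any staircase shape $S$ on $n$ nodes whose number of turning points is bounded by a constant can be grown from a single node in $O(\log n)$ time steps, both in the connectivity graph model and in the adjacency graph model.
   Context: Shapes. Grid points are integer pairs $(x,y)$; two grid points are adjacent if they are at orthogonal (Manhattan) distance $1$. A shape $S=(V,E)$ is a finite connected graph whose nodes occupy distinct grid points and whose edges join only pairs of nodes occupying adjacent points; shapes are considered up to translation, and $n=|V|$. The adjacency closure $AC(S)$ is obtained from $S$ by adding an edge between every pair of adjacent nodes that are not yet joined. Growth operations. One node, the anchor $u_0$, is stationary; other nodes move relative to it. A growth operation on a node $u$ toward an adjacent grid point $p$ either (i) if $u$ has no edge to $p$, creates a new node $u'$ at $p$ with edge $uu'$; or (ii) if $p$ is occupied by a node $v$ with $uv\in E$, creates a new node $u'$ at $p$, replaces edge $uv$ by edges $uu',u'v$, and translates by one unit, along the axis of $uv$, the part of a spanning tree rooted at $u_0$ hanging from whichever of $u,v$ is farther from $u_0$, away from the other endpoint. In one time step a set of operations is applied concurrently, each node receiving at most one operation and all operations having the same cardinal direction; the displacement of each node is the sum of the unit vectors contributed by the operations on its path to $u_0$. The set is collision-free if no two nodes collide during these motions or end at the same point, and no cycle is distorted (displacements along the two paths of any cycle between two of its nodes agree). Growth processes. A growth process from $S_1^b=S_0$ applies in each time step $t$ a collision-free set of operations to $S_t^b$ obtaining $S_t^e$ (deleting no edges). In the connectivity graph model $S_{t+1}^b=S_t^e$; in the adjacency graph model $S_{t+1}^b=AC(S_t^e)$. It grows $S$ in $t_f$ steps if the shape after step $t_f$ is $S$.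 For a path, a node is a turning point if it is an endpoint or its two path-neighbors form a right angle at it. A staircase is a path whose turning points, ordered from one endpoint to the other, alternate between two clockwise- (or counterclockwise-) consecutive cardinal directions. *)

(* Defs.v *)
From mathcomp Require Import all_boot all_order all_algebra.
Set Implicit Arguments. Unset Strict Implicit. Unset Printing Implicit Defensive.
Import Order.TTheory GRing.Theory Num.Theory.

Definition point := (int * int)%type.

Definition padd (p q : point) : point := ((p.1 + q.1)%R, (p.2 + q.2)%R).
Definition psub (p q : point) : point := ((p.1 - q.1)%R, (p.2 - q.2)%R).
Definition pscale (k : int) (p : point) : point := ((k * p.1)%R, (k * p.2)%R).
Definition origin : point := (0%R, 0%R).

Definition adj (p q : point) : bool := (absz (p.1 - q.1)%R + absz (p.2 - q.2)%R == 1)%N.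
Definition unitv (d : point) : bool := adj origin d.
Definition perp (d e : point) : bool := (d.1 * e.1 + d.2 * e.2 == 0)%R.

(* Since nodes occupy distinct grid points, a node is
   identified with the grid point it occupies.  A gshape is a list of
   occupied points and a list of edges (unordered: both orientations
   are read as the same edge).                                         *)
Record gshape := GShape { nodes : seq point; edges : seq (point * point) }.

Definition erel (S : gshape) (p q : point) : bool :=
  ((p, q) \in edges S) || ((q, p) \in edges S).

Definition connected_shape (S : gshape) : Prop :=
  forall p q, p \in nodes S -> q \in nodes S ->
    exists s : seq point, path (erel S) p s && (last p s == q).

Definition wf_shape (S : gshape) : Prop :=
  [/\ nodes S != [::], uniq (nodes S),
      (forall e, e \in edges S -> [/\ e.1 \in nodes S, e.2 \in nodes S & adj e.1 e.2])
    & connected_shape S].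

Definition same_shape (S T : gshape) : Prop :=
  exists v : point,
    (forall p, (p \in nodes S) = (padd p v \in nodes T)) /\
    (forall p q, erel S p q = erel T (padd p v) (padd q v)).

Definition AC (S : gshape) : gshape :=
  GShape (nodes S)
        (edges S ++ [seq (p, q) | p <- nodes S, q <- [seq q <- nodes S | adj p q]]).

(* All operations have the common cardinal direction d;
   ops is the set of nodes u receiving an operation (toward u + d).
   The operation on u is of type (ii) iff u has an edge to u + d.
   par/dep describe a spanning tree rooted at the anchor a (parent and
   depth); disp is the displacement of the old nodes.                  *)

(* the edge {x,y} is the edge operated on by a type-(ii) operation *)
Definition opd (ops : seq point) (d x y : point) : bool :=
  ((x \in ops) && (y == padd x d)) || ((y \in ops) && (x == padd y d)).

(* x is the farther endpoint (in the tree) of a type-(ii) operation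
   on x - d toward x : the part hanging from x moves by +d *)
Definition mover_plus (S : gshape) (ops : seq point) (dep : point -> nat) (d x : point) : bool :=
  (psub x d \in ops) && erel S (psub x d) x && (dep (psub x d) < dep x)%N.
(* x is the farther endpoint of a type-(ii) operation on x toward
   x + d : the part hanging from x moves by -d *)
Definition mover_minus (S : gshape) (ops : seq point) (dep : point -> nat) (d x : point) : bool :=
  (x \in ops) && erel S x (padd x d) && (dep (padd x d) < dep x)%N.

(* unit vectors contributed at node x by the operations whose moving
   part hangs from x *)
Definition contrib S ops dep d x : point :=
  pscale ((nat_of_bool (mover_plus S ops dep d x))%:Z
          - (nat_of_bool (mover_minus S ops dep d x))%:Z)%R d.

Definition fpos (disp : point -> point) (x : point) : point := padd x (disp x).

Definition rpos (x : point) (t : rat) (v : point) : rat * rat :=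
  ((x.1%:~R + t * v.1%:~R)%R, (x.2%:~R + t * v.2%:~R)%R).

Definition collision_free (S : gshape) (d : point) (ops : seq point)
  (disp : point -> point) : Prop :=
  (forall x y, x \in nodes S -> y \in nodes S -> x != y ->
     forall t : rat, (0 <= t)%R -> (t <= 1)%R -> rpos x t (disp x) != rpos y t (disp y)) /\
  (forall x u, x \in nodes S -> u \in ops -> fpos disp x != padd (fpos disp u) d) /\
  (forall u w, u \in ops -> w \in ops -> u != w ->
     padd (fpos disp u) d != padd (fpos disp w) d) /\
  (* no cycle is distorted: along every edge the relative displacement of
     its endpoints is the one prescribed by the operation on that edge
     (none, or one unit along the edge if the edge is operated on) *)
  (forall x y, erel S x y ->
     psub (fpos disp y) (fpos disp x) = pscale (1 + (nat_of_bool (opd ops d x y))%:Z)%R (psub y x)).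

Definition end_shape (S : gshape) (d : point) (ops : seq point) (disp : point -> point) : gshape :=
  let f := fpos disp in
  GShape (map f (nodes S) ++ map (fun u => padd (f u) d) ops)
        ([seq (f e.1, f e.2) | e <- [seq e <- edges S | ~~ opd ops d e.1 e.2]]
         ++ [seq (f u, padd (f u) d) | u <- ops]
         ++ [seq (padd (f u) d, f (padd u d)) | u <- [seq u <- ops | erel S u (padd u d)]]).

Definition step (a : point) (S S' : gshape) : Prop :=
  exists (d : point) (ops : seq point) (par : point -> point) (dep : point -> nat)
         (disp : point -> point),
    [/\ unitv d, a \in nodes S, uniq ops & {subset ops <= nodes S}] /\
    (dep a = 0%N /\
     forall x, x \in nodes S -> x != a ->
       [/\ par x \in nodes S, erel S x (par x) & dep x = (dep (par x)).+1]) /\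
    (* displacement = sum of the contributions on the tree path to a *)
    (disp a = origin /\
     forall x, x \in nodes S -> x != a ->
       disp x = padd (disp (par x)) (contrib S ops dep d x)) /\
    collision_free S d ops disp /\
    S' = end_shape S d ops disp.

(* Growth processes from a single node (the anchor, at the origin).
   adjm = false : connectivity graph model; adjm = true : adjacency
   graph model.  grows_in adjm S tf : the process grows S in tf steps. *)
Definition seed : gshape := GShape [:: origin] [::].

Definition grows_in (adjm : bool) (S : gshape) (tf : nat) : Prop :=
  exists B E : nat -> gshape,
    B 0%N = seed /\
    (forall t, (t < tf)%N ->
       step origin (B t) (E t) /\ B t.+1 = (if adjm then AC (E t) else E t)) /\
    same_shape (if tf is t.+1 then E t else seed) S.

Definition at_ (s : seq point) (i : nat) : point := nth origin s i.

Definition path_of (S : gshape) (s : seq point) : Prop :=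
  [/\ s != [::], perm_eq s (nodes S) &
      forall p q, erel S p q =
        ((p, q) \in zip s (behead s)) || ((q, p) \in zip s (behead s))].

Definition turning (s : seq point) (i : nat) : bool :=
  (i == 0%N) || (i == (size s).-1) ||
  perp (psub (at_ s i.-1) (at_ s i)) (psub (at_ s i.+1) (at_ s i)).

Definition turning_points (s : seq point) : seq nat :=
  [seq i <- iota 0 (size s) | turning s i].

Definition staircase (s : seq point) : Prop :=
  exists d1 d2 : point,
    [&& unitv d1, unitv d2 & perp d1 d2] /\
    let tp := turning_points s in
    forall k, (k.+1 < size tp)%N ->
      forall m, (nth 0%N tp k <= m < nth 0%N tp k.+1)%N ->
        psub (at_ s m.+1) (at_ s m) = (if odd k then d2 else d1).

(* Main.v *)
Require Import Defs.
From mathcomp Require Import all_boot all_order all_algebra.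
From mathcomp Require Import zify ring lra.
Import Order.TTheory GRing.Theory Num.Theory.
Set Implicit Arguments. Unset Strict Implicit. Unset Printing Implicit Defensive.
Local Open Scope ring_scope.


Lemma unit_cases (v : point) : unitv v ->
  v = (1,0) \/ v = (-1,0) \/ v = (0,1) \/ v = (0,-1).
Proof.
case: v => a b; rewrite /unitv /adj /origin /=.
move/eqP => H.
have : ((a = 1 /\ b = 0) \/ (a = -1 /\ b = 0) \/ (a = 0 /\ b = 1) \/ (a = 0 /\ b = -1)) by lia.
by case=> [[-> ->]|[[-> ->]|[[-> ->]|[-> ->]]]]; auto.
Qed.

Definition phi (e p : point) : int := p.1 * e.1 + p.2 * e.2.

Lemma phi_d (d1 d2 : point) : unitv d1 -> unitv d2 -> perp d1 d2 ->
  phi (padd d1 d2) d1 = 1 /\ phi (padd d1 d2) d2 = 1 /\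
  forall v, unitv v -> phi (padd d1 d2) v = 1 \/ phi (padd d1 d2) v = -1.
Proof.
move=> /unit_cases H1 /unit_cases H2; rewrite /perp.
by case: H1 => [->|[->|[->|->]]]; case: H2 => [->|[->|[->|->]]] //= _;
 (split; [done|split;[done|]]) => v /unit_cases; case=> [->|[->|[->|->]]]; auto.
Qed.

Lemma phiD e p q : phi e (padd p q) = phi e p + phi e q.
Proof. rewrite /phi /padd /=; ring. Qed.
Lemma phiB e p q : phi e (psub p q) = phi e p - phi e q.
Proof. rewrite /phi /psub /=; ring. Qed.
Lemma phiZ e k p : phi e (pscale k p) = k * phi e p.
Proof. rewrite /phi /pscale /=; ring. Qed.
Lemma phi0 e : phi e origin = 0.
Proof. by rewrite /phi /origin /= !mul0r addr0. Qed.

Record Rep (e : point) (S : gshape) (N : nat) : Prop := {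
  r_uniq : uniq (nodes S);
  r_size : size (nodes S) = N.+1;
  r_range : forall p, p \in nodes S -> 0 <= phi e p <= N%:Z;
  r_inj : forall p q, p \in nodes S -> q \in nodes S -> phi e p = phi e q -> p = q;
  r_orig : origin \in nodes S;
  r_erel : forall p q, erel S p q = [&& p \in nodes S, q \in nodes S &
        (phi e q == phi e p + 1) || (phi e p == phi e q + 1)] }.

Lemma rep_surj e S N : Rep e S N -> forall i : int, 0 <= i <= N%:Z ->
  exists2 p, p \in nodes S & phi e p = i.
Proof.
case=> Hu Hs Hr Hi Ho He i Hi0.
pose s1 := map (phi e) (nodes S).
pose s2 := map (fun n : nat => n%:Z) (iota 0 N.+1).
have u1 : uniq s1 by rewrite map_inj_in_uniq // => p q Hp Hq; apply: Hi.
have sub : {subset s1 <= s2}.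
  move=> x /mapP [p Hp ->]; have := Hr p Hp => Hb.
  apply/mapP; exists (absz (phi e p)); last by lia.
  rewrite mem_iota; lia.
have [_ eqs] := uniq_min_size u1 sub (ltac:(by rewrite !size_map size_iota Hs)).
have : i \in s2.
  apply/mapP; exists (absz i); last by lia.
  rewrite mem_iota; lia.
by rewrite -eqs => /mapP [p Hp ->]; exists p.
Qed.


Lemma count_lt (T : eqType) (s : seq T) (a b : pred T) u :
  uniq s -> u \in s -> a u -> ~~ b u -> subpred b a -> (count b s < count a s)%N.
Proof.
move=> Us us au bu ba.
have H1 : (count (predU b (pred1 u)) s <= count a s)%N.
  by apply: sub_count => x /orP [/ba|/eqP ->].
have H2 : count (predI b (pred1 u)) s = 0%N.
  rewrite (eq_count (a2 := pred0)) ?count_pred0 // => x /=.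
  by apply/negbTE; apply/andP => [[bx /eqP xu]]; move: bu; rewrite -xu bx.
have := count_predUI b (pred1 u) s; rewrite H2 addn0 count_uniq_mem // us.
move=> E; rewrite E in H1; lia.
Qed.

Section GS.
Variables (e d : point) (S : gshape) (N : nat) (sel : pred point).
Hypothesis Hrep : Rep e S N.
Hypothesis Hd : phi e d = 1.
Hypothesis Hsel : forall p, p \in nodes S -> sel p ->
  (padd p d \in nodes S) \/ phi e p = N%:Z.

Local Notation ph := (phi e).
Definition cnt (p : point) : nat := count (fun r => sel r && (ph r < ph p)) (nodes S).
Definition psi p : int := ph p + (cnt p)%:Z.

Lemma cnt_mono p q : ph p <= ph q -> (cnt p <= cnt q)%N.
Proof.
move=> H; apply: sub_count => r /andP [-> /= h]; exact: lt_le_trans h H.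
Qed.

Lemma cnt_strict u p : u \in nodes S -> sel u -> ph u < ph p -> (cnt u < cnt p)%N.
Proof.
move=> un su lt; apply: (count_lt (r_uniq Hrep) un) => /=.
- by rewrite su lt.
- by rewrite ltxx andbF.
- move=> r /andP [-> /= h]; exact: lt_trans h lt.
Qed.

Lemma cnt_tot p : (cnt p <= count sel (nodes S))%N.
Proof. by apply: sub_count => r /andP []. Qed.

Lemma cnt_tot_sel u : u \in nodes S -> sel u -> (cnt u < count sel (nodes S))%N.
Proof.
move=> un su; apply: (count_lt (r_uniq Hrep) un) => //=.
- by rewrite ltxx andbF.
- by move=> r /andP [].
Qed.

Lemma cnt_next p q : p \in nodes S -> q \in nodes S -> ph q = ph p + 1 ->
  cnt q = (cnt p + sel p)%N.
Proof.
move=> pn qn E.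
set a1 := (fun r => sel r && (ph r < ph p)).
set a2 := (fun r => sel r && (ph r == ph p)).
have U := count_predUI a1 a2 (nodes S).
have I0 : count (predI a1 a2) (nodes S) = 0%N.
  rewrite (eq_count (a2 := pred0)) ?count_pred0 // => x /=.
  by rewrite /a1 /a2; case: (ltgtP (ph x) (ph p)); rewrite ?andbF.
have A2 : count a2 (nodes S) = nat_of_bool (sel p).
  rewrite (@eq_in_count _ _ (fun r => sel p && (r == p))).
    case: (sel p); last by rewrite (eq_count (a2 := pred0)) ?count_pred0.
    by rewrite (eq_count (a2 := pred1 p)) // count_uniq_mem ?pn // (r_uniq Hrep).
  move=> x xn /=; rewrite /a2; apply/andP/andP => [[sx /eqP ex]|[sp /eqP ->]]; last by rewrite sp eqxx.
  have xp := r_inj Hrep xn pn ex; subst x; by rewrite sx eqxx.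
have Eq : cnt q = count (predU a1 a2) (nodes S).
  apply: eq_count => r /=; rewrite /a1 /a2 E.
  by case: (sel r) => //=; rewrite ltzD1 le_eqVlt orbC.
by rewrite Eq; move: U; rewrite I0 A2 addn0.
Qed.

Lemma psi_le p q : ph p <= ph q -> psi p <= psi q.
Proof. move=> H; have := cnt_mono H; rewrite /psi; lia. Qed.

Lemma psi_lt p q : ph p < ph q -> psi p < psi q.
Proof. move=> H; have := cnt_mono (ltW H); rewrite /psi; lia. Qed.

Lemma psi_phi p q : psi p = psi q -> ph p = ph q.
Proof.
move=> E; case: (ltgtP (ph p) (ph q)) => // H.
  by have := psi_lt H; rewrite E ltxx.
by have := psi_lt H; rewrite E ltxx.
Qed.

Lemma psi_inj p q : p \in nodes S -> q \in nodes S -> psi p = psi q -> p = q.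
Proof. by move=> pn qn /psi_phi; apply: (r_inj Hrep). Qed.

Lemma nohit x u : x \in nodes S -> u \in nodes S -> sel u -> psi x <> psi u + 1.
Proof.
move=> xn un su; case: (lerP (ph x) (ph u)) => H.
  have := psi_le H; lia.
have := cnt_strict un su H; rewrite /psi; lia.
Qed.

Lemma cnt_orig : cnt origin = 0%N.
Proof.
rewrite /cnt (@eq_in_count _ _ pred0) ?count_pred0 // => r rn /=.
have := r_range Hrep rn; rewrite phi0; case: (sel r) => //=; lia.
Qed.

Lemma next_of_sel u y : u \in nodes S -> sel u -> y \in nodes S ->
  ph y = ph u + 1 -> y = padd u d.
Proof.
move=> un su yn E; case: (Hsel un su) => [H|H].
  by apply: (r_inj Hrep) => //; rewrite phiD Hd.
by have := r_range Hrep yn; rewrite E H; lia.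
Qed.

Definition ops := filter sel (nodes S).

Lemma opd_next x y : x \in nodes S -> y \in nodes S -> ph y = ph x + 1 ->
  opd ops d x y = sel x.
Proof.
move=> xn yn E; rewrite /opd /ops !mem_filter xn yn !andbT.
have -> : (x == padd y d) = false.
  apply/negbTE/eqP => H; move: E; rewrite H phiD Hd; lia.
rewrite andbF orbF; case sx: (sel x) => //=.
by apply/eqP; apply: next_of_sel.
Qed.

Lemma oldold x y : x \in nodes S -> y \in nodes S -> psi y = psi x + 1 ->
  ph y = ph x + 1 /\ sel x = false.
Proof.
move=> xn yn E.
have E1 : ph y = ph x + 1.
  case: (lerP (ph y) (ph x)) => H; first by have := psi_le H; lia.
  case: (lerP (ph y) (ph x + 1)) => H2; first lia.
  have := cnt_mono (ltW H); move: E; rewrite /psi; lia.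
split => //; have := cnt_next xn yn E1; move: E; rewrite /psi E1.
case: (sel x) => //=; lia.
Qed.

Lemma newold u y : u \in nodes S -> sel u -> y \in nodes S -> psi y = psi u + 2 ->
  ph y = ph u + 1.
Proof.
move=> un su yn E.
case: (lerP (ph y) (ph u)) => H; first by have := psi_le H; lia.
case: (lerP (ph y) (ph u + 1)) => H2; first lia.
have := cnt_strict un su H; move: E; rewrite /psi; lia.
Qed.

Lemma opd_sym (o : seq point) x y : opd o d x y = opd o d y x.
Proof. by rewrite /opd orbC. Qed.

Definition disp p := pscale (cnt p)%:Z d.
Definition depf p := absz (ph p).
Definition parf p := nth origin (nodes S) (find (fun r => ph r == ph p - 1) (nodes S)).

Lemma fpos_phi p : ph (fpos disp p) = psi p.
Proof. by rewrite /fpos /disp phiD phiZ Hd mulr1. Qed.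

Lemma parf_spec x : x \in nodes S -> x != origin ->
  parf x \in nodes S /\ ph (parf x) = ph x - 1.
Proof.
move=> xn xo.
have H0 : ph x != 0.
  apply/eqP => H; move: xo; apply/negP; rewrite negbK; apply/eqP.
  by apply: (r_inj Hrep) => //; [exact: (r_orig Hrep)| rewrite phi0].
have := r_range Hrep xn => Hr.
have H1 : 0 <= ph x - 1 <= N%:Z by move: H0 Hr; lia.
have [r rn rE] := rep_surj Hrep H1.
have Hh : has (fun r => ph r == ph x - 1) (nodes S) by apply/hasP; exists r => //; apply/eqP.
split; first by rewrite /parf mem_nth // -has_find.
by apply/eqP; exact: (nth_find origin Hh).
Qed.

Lemma mover_minus_eq x : x \in nodes S -> mover_minus S ops depf d x = false.
Proof.
move=> xn; rewrite /mover_minus /depf phiD Hd.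
have := r_range Hrep xn => Hr.
have -> : (absz (ph x + 1)%R < absz (ph x))%N = false by apply/negbTE; lia.
by rewrite andbF.
Qed.

Lemma psubK p : psub (padd p d) d = p.
Proof. case: p => a b; rewrite /psub /padd /=; congr (_, _); ring. Qed.

Lemma mover_plus_eq x : x \in nodes S -> x != origin ->
  mover_plus S ops depf d x = sel (parf x).
Proof.
move=> xn xo; have [pn pE] := parf_spec xn xo.
have H0 : ph x != 0 by apply/negP => /eqP H; move: xo; apply/negP; rewrite negbK; apply/eqP; apply: (r_inj Hrep) => //; [exact: (r_orig Hrep)|rewrite phi0].
have := r_range Hrep xn => Hr.
rewrite /mover_plus; case sp: (sel (parf x)).
  have xE : x = padd (parf x) d by apply: next_of_sel => //; rewrite pE; ring.
  rewrite {1 2 4}xE psubK /ops mem_filter sp pn /= (r_erel Hrep) pn xn pE /=.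
  rewrite /depf pE subrK eqxx /=; move: Hr H0; lia.
apply/negbTE; apply/andP => [[/andP [H1 _] _]].
move: H1; rewrite /ops mem_filter => /andP [sx xdn].
have E : psub x d = parf x by apply: (r_inj Hrep) => //; rewrite phiB Hd pE.
by move: sx; rewrite E sp.
Qed.

Lemma pscaleD (a b : int) p : pscale (a + b) p = padd (pscale a p) (pscale b p).
Proof. rewrite /pscale /padd /=; congr (_, _); ring. Qed.

Lemma tree_disp x : x \in nodes S -> x != origin ->
  disp x = padd (disp (parf x)) (contrib S ops depf d x).
Proof.
move=> xn xo; have [pn pE] := parf_spec xn xo.
rewrite /contrib mover_plus_eq // mover_minus_eq // subr0 /disp.
rewrite (cnt_next pn xn); last by rewrite pE; ring.
by rewrite PoszD pscaleD.
Qed.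

Lemma rpos_lin x (t : rat) (c : int) :
  (rpos x t (pscale c d)).1 * (e.1)%:~R + (rpos x t (pscale c d)).2 * (e.2)%:~R = (ph x)%:~R + t * c%:~R.
Proof.
have Hd' : (d.1)%:~R * (e.1)%:~R + (d.2)%:~R * (e.2)%:~R = 1 :> rat.
  by rewrite -!intrM -intrD; move: Hd; rewrite /phi => ->.
rewrite /rpos /pscale /phi /= !intrD !intrM.
have -> : t * c%:~R = t * c%:~R * ((d.1)%:~R * (e.1)%:~R + (d.2)%:~R * (e.2)%:~R) :> rat
  by rewrite Hd' mulr1.
ring.
Qed.

Lemma coll1_lt x y (t : rat) : x \in nodes S -> y \in nodes S -> ph x < ph y ->
  0 <= t -> rpos x t (disp x) != rpos y t (disp y).
Proof.
move=> xn yn lt t0; apply/eqP => E.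
have E2 := congr1 (fun r : rat * rat => r.1 * (e.1)%:~R + r.2 * (e.2)%:~R) E.
cbv beta in E2; rewrite /disp !rpos_lin in E2.
have H1 : (ph x)%:~R + 1 <= (ph y)%:~R :> rat.
  by rewrite -[1]/(1%:~R) -intrD ler_int; move: lt; lia.
have H2 : (cnt x)%:~R <= (cnt y)%:~R :> rat.
  by rewrite ler_int; have := cnt_mono (ltW lt); lia.
have H3 : 0 <= t * ((cnt y)%:~R - (cnt x)%:~R) :> rat by apply: mulr_ge0; lra.
rewrite mulrBr in H3.
have key : forall (a b P1 P2 : rat), a + P1 = b + P2 -> a + 1 <= b -> 0 <= P2 - P1 -> False.
  move=> a b P1 P2; lra.
exact: key E2 H1 H3.
Qed.

Lemma coll1 x y (t : rat) : x \in nodes S -> y \in nodes S -> x != y ->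
  0 <= t -> rpos x t (disp x) != rpos y t (disp y).
Proof.
move=> xn yn xy t0; case: (ltgtP (ph x) (ph y)) => H.
- exact: coll1_lt.
- by rewrite eq_sym; apply: coll1_lt.
- by move: xy; rewrite (r_inj Hrep xn yn H) eqxx.
Qed.

Lemma pscale_d_sub x y c : psub (padd y (pscale c d)) (padd x (pscale c d)) = psub y x.
Proof. rewrite /psub /padd /=; congr (_, _); ring. Qed.

Lemma coll4_dir x y : x \in nodes S -> y \in nodes S -> ph y = ph x + 1 ->
  psub (fpos disp y) (fpos disp x) =
  pscale (1 + (nat_of_bool (opd ops d x y))%:Z)%R (psub y x).
Proof.
move=> xn yn E; rewrite opd_next // /fpos /disp (cnt_next xn yn E).
case sx: (sel x) => /=.
  have -> : y = padd x d by apply: next_of_sel.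
  rewrite /psub /padd /pscale /= PoszD; congr (_, _); ring.
rewrite addn0 pscale_d_sub /pscale; case: (psub y x) => a b /=; congr (_, _); ring.
Qed.

Lemma pscale_neg (k : int) p q : pscale k (psub p q) = psub origin (pscale k (psub q p)).
Proof. rewrite /pscale /psub /origin /=; congr (_, _); ring. Qed.

Lemma coll4 x y : erel S x y ->
  psub (fpos disp y) (fpos disp x) =
  pscale (1 + (nat_of_bool (opd ops d x y))%:Z)%R (psub y x).
Proof.
rewrite (r_erel Hrep) => /and3P [xn yn /orP [/eqP E|/eqP E]]; first exact: coll4_dir.
rewrite opd_sym pscale_neg -coll4_dir //.
by rewrite /psub /origin /=; congr (_, _); ring.
Qed.

Hypothesis Hud : unitv d.

Lemma gs_step : step origin S (end_shape S d ops disp).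
Proof.
exists d, ops, parf, depf, disp; split.
  split => //; first exact: r_orig Hrep.
    by rewrite /ops filter_uniq // (r_uniq Hrep).
  by move=> u; rewrite /ops mem_filter => /andP [].
split.
  split; first by rewrite /depf phi0.
  move=> x xn xo; have [pn pE] := parf_spec xn xo.
  have H0 : ph x != 0 by apply/negP => /eqP H; move: xo; apply/negP; rewrite negbK; apply/eqP; apply: (r_inj Hrep) => //; [exact: (r_orig Hrep)|rewrite phi0].
  have Hr := r_range Hrep xn.
  split => //; first by rewrite (r_erel Hrep) xn pn pE subrK eqxx orbT.
  by rewrite /depf pE; move: Hr H0; lia.
split.
  split; first by rewrite /disp cnt_orig /pscale /origin /= !mul0r.
  by move=> x xn xo; apply: tree_disp.
split => //.
split; first by move=> x y xn yn xy t t0 _; apply: coll1.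
split.
  move=> x u xn; rewrite /ops mem_filter => /andP [su un]; apply/eqP => E.
  by apply: (nohit xn un su); rewrite -!fpos_phi E phiD Hd.
split.
  move=> u w; rewrite /ops !mem_filter => /andP [su un] /andP [sw wn] uw; apply/eqP => E.
  move: uw; rewrite (psi_inj un wn) ?eqxx //.
  by have := congr1 ph E; rewrite (phiD e (fpos disp u)) (phiD e (fpos disp w)) !fpos_phi => /addIr.
exact: coll4.
Qed.

Local Notation S' := (end_shape S d ops disp).
Local Notation f := (fpos disp).

Lemma phig u : ph (padd (f u) d) = psi u + 1.
Proof. by rewrite (phiD e (f u)) fpos_phi Hd. Qed.

Lemma nodes_cases P : P \in nodes S' ->
  (exists2 x, x \in nodes S & P = f x) \/
  (exists2 u, (u \in nodes S) && sel u & P = padd (f u) d).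
Proof.
rewrite /= mem_cat => /orP [/mapP [x xn ->]|/mapP [u]].
  by left; exists x.
by rewrite /ops mem_filter andbC => un ->; right; exists u.
Qed.

Lemma nodes_f x : x \in nodes S -> f x \in nodes S'.
Proof. by move=> xn; rewrite /= mem_cat map_f. Qed.

Lemma nodes_g u : u \in nodes S -> sel u -> padd (f u) d \in nodes S'.
Proof.
move=> un su; rewrite /= mem_cat; apply/orP; right.
by apply/mapP; exists u => //; rewrite /ops mem_filter su.
Qed.

Lemma edge_fw P Q : (P, Q) \in edges S' ->
  [&& P \in nodes S', Q \in nodes S' & (ph Q == ph P + 1) || (ph P == ph Q + 1)].
Proof.
move=> H; rewrite /= !mem_cat in H; case/or3P: H => [/mapP [[a b]]|/mapP [u]|/mapP [u]].
- rewrite mem_filter /= => /andP [nop ab] [-> ->].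
  have : erel S a b by rewrite /erel ab.
  rewrite (r_erel Hrep) => /and3P [an bn /orP [/eqP E|/eqP E]].
    rewrite !nodes_f //= !fpos_phi.
    have := cnt_next an bn E; rewrite -(opd_next an bn E) (negbTE nop) addn0.
    by move=> Hc; rewrite /psi E Hc; apply/orP; left; apply/eqP; ring.
  rewrite !nodes_f //= !fpos_phi.
  have := cnt_next bn an E; rewrite -(opd_next bn an E) opd_sym (negbTE nop) addn0.
  by move=> Hc; rewrite /psi E Hc; apply/orP; right; apply/eqP; ring.
- rewrite /ops mem_filter => /andP [su un] [-> ->].
  by rewrite nodes_f // nodes_g // phig fpos_phi eqxx.
- rewrite !mem_filter => /andP [er /andP [su un]] [-> ->].
  move: er; rewrite (r_erel Hrep) => /and3P [_ udn _].
  have E : ph (padd u d) = ph u + 1 by rewrite phiD Hd.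
  rewrite nodes_g // nodes_f // phig fpos_phi.
  have := cnt_next un udn E; rewrite su /psi E => ->.
  apply/orP; left; apply/eqP; rewrite -[(cnt u + true)%N]/(cnt u + 1)%N PoszD; ring.
Qed.

Lemma edge_bw P Q : P \in nodes S' -> Q \in nodes S' -> ph Q = ph P + 1 ->
  ((P, Q) \in edges S') || ((Q, P) \in edges S').
Proof.
move=> /nodes_cases [[x xn ->]|[u /andP [un su] ->]] /nodes_cases [[y yn ->]|[w /andP [wn sw] ->]].
- rewrite !fpos_phi => E; have [E1 sx] := oldold xn yn E.
  have nop : opd ops d x y = false by rewrite opd_next.
  have : erel S x y by rewrite (r_erel Hrep) xn yn E1 eqxx.
  rewrite /erel => /orP [xy|yx]; apply/orP; [left|right]; rewrite /= !mem_cat; apply/orP; left.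
    by apply/mapP; exists (x, y) => //; rewrite mem_filter /= nop xy.
  by apply/mapP; exists (y, x) => //; rewrite mem_filter /= opd_sym nop yx.
- rewrite fpos_phi phig => /(addIr 1) E; have wx := psi_inj wn xn E; subst w.
  apply/orP; left; rewrite /= !mem_cat; apply/orP; right; apply/orP; left.
  by apply/mapP; exists x => //; rewrite /ops mem_filter sw.
- rewrite fpos_phi phig => E.
  have E1 : psi y = psi u + 2 by rewrite E -addrA.
  have E2 := newold un su yn E1.
  have yE := next_of_sel un su yn E2; subst y.
  apply/orP; left; rewrite /= !mem_cat; apply/orP; right; apply/orP; right.
  apply/mapP; exists u => //; rewrite !mem_filter su un andbT.
  by rewrite (r_erel Hrep) un yn E2 eqxx.
- rewrite !phig => E; exfalso; apply: (nohit wn un su).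
  by move: E => /(addIr 1).
Qed.

Lemma f_inj : {in nodes S &, injective f}.
Proof. by move=> x y xn yn E; apply: psi_inj => //; rewrite -!fpos_phi E. Qed.

Lemma gs_rep : Rep e S' (N + count sel (nodes S)).
Proof.
have Hu := r_uniq Hrep.
split.
- rewrite /= cat_uniq (map_inj_in_uniq f_inj).
  rewrite map_inj_in_uniq ?filter_uniq //; last first.
    move=> u w; rewrite /ops !mem_filter => /andP [_ un] /andP [_ wn] E.
    by apply: psi_inj => //; apply/(addIr 1); rewrite -!phig E.
  rewrite Hu andbT /=; apply/hasPn => P /mapP [u]; rewrite /ops mem_filter => /andP [su un] ->.
  apply/negP => /mapP [x xn E]; apply: (nohit xn un su).
  by rewrite -phig E fpos_phi.
- by rewrite /= size_cat !size_map size_filter (r_size Hrep) addSn.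
- move=> P /nodes_cases [[x xn ->]|[u /andP [un su] ->]].
    rewrite fpos_phi /psi; have := r_range Hrep xn; have := cnt_tot x; lia.
  rewrite phig /psi; have := r_range Hrep un; have := cnt_tot_sel un su; lia.
- move=> P Q /nodes_cases [[x xn ->]|[u /andP [un su] ->]]
             /nodes_cases [[y yn ->]|[w /andP [wn sw] ->]].
  + by rewrite !fpos_phi => /(psi_inj xn yn) ->.
  + by rewrite fpos_phi phig => E; exfalso; apply: (nohit xn wn sw).
  + by rewrite fpos_phi phig => E; exfalso; apply: (nohit yn un su).
  + by rewrite !phig => /(addIr 1) /(psi_inj un wn) ->.
- have -> : origin = f origin by rewrite /fpos /disp cnt_orig /pscale /padd /origin /= !mul0r !addr0.
  exact/nodes_f/(r_orig Hrep).
- move=> P Q; apply/idP/idP.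
    rewrite /erel => /orP [/edge_fw //|/edge_fw /and3P [Qn Pn E]].
    by rewrite Pn Qn orbC.
  move=> /and3P [Pn Qn /orP [/eqP E|/eqP E]].
    by rewrite /erel; apply: edge_bw.
  by rewrite /erel orbC; apply: edge_bw.
Qed.

End GS.


Lemma adj_unit p q : adj p q -> unitv (psub q p).
Proof. rewrite /unitv /adj /origin /psub /=; lia. Qed.

Lemma rep_AC e S N : Rep e S N ->
  (forall v, unitv v -> phi e v = 1 \/ phi e v = -1) -> Rep e (Defs.AC S) N.
Proof.
move=> R Hu; case: (R) => r1 r2 r3 r4 r5 r6; split => //.
have ext : forall x y, (x, y) \in [seq (p, q) | p <- nodes S, q <- [seq q <- nodes S | adj p q]] ->
   [&& x \in nodes S, y \in nodes S & (phi e y == phi e x + 1) || (phi e x == phi e y + 1)].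
  move=> x y /allpairsPdep [a [b [an]]]; rewrite mem_filter => /andP [ab bn] [-> ->].
  rewrite an bn /=; have := Hu _ (adj_unit ab); rewrite phiB.
  case=> E; apply/orP; [left|right]; apply/eqP; move: E; lia.
move=> p q; apply/idP/idP.
- rewrite /erel /= !mem_cat => /orP [/orP [H|H]|/orP [H|H]].
  + by rewrite -r6 /erel H.
  + exact: ext H.
  + by rewrite -r6 /erel H orbT.
  + by have := ext _ _ H; case/and3P=> -> -> /=; rewrite orbC.
- rewrite -r6 /erel /= !mem_cat => /orP [H|H]; by rewrite H ?orbT.
Qed.

Definition Pre (e : point) (q : nat -> point) (S : gshape) (N : nat) : Prop :=
  Rep e S N /\ forall p, p \in nodes S -> p = q (absz (phi e p)).

Lemma count_nodes e S N (selI : pred nat) : Rep e S N ->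
  count (fun p => selI (absz (phi e p))) (nodes S) = count selI (iota 0 N.+1).
Proof.
move=> R.
have -> : count (fun p => selI (absz (phi e p))) (nodes S) =
  count selI (map (fun p => absz (phi e p)) (nodes S)) by rewrite count_map.
apply/permP; apply: uniq_perm; last first.
- move=> i; rewrite mem_iota add0n; apply/mapP/idP.
    by case=> p pn ->; have := r_range R pn; lia.
  move=> H; have [p pn pE] := rep_surj R (i := i%:Z) ltac:(lia).
  by exists p => //; rewrite pE.
- exact: iota_uniq.
- rewrite map_inj_in_uniq ?(r_uniq R) // => x y xn yn E.
  apply: (r_inj R) => //; have := r_range R xn; have := r_range R yn; lia.
Qed.

Lemma padd_scale a (k c : int) d :
  padd (padd a (pscale k d)) (pscale c d) = padd a (pscale (k + c) d).
Proof. rewrite /padd /pscale /=; congr (_, _); ring. Qed.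

Section PS.
Variables (e d : point) (q : nat -> point) (S : gshape) (N lo hi : nat) (selI : pred nat).
Hypothesis HP : Pre e q S N.
Hypothesis Hd : phi e d = 1.
Hypothesis Hud : unitv d.
Hypothesis Hunits : forall v, unitv v -> phi e v = 1 \/ phi e v = -1.
Hypothesis Hlo : (lo <= N)%N.
Hypothesis Hline : forall j : nat, (lo <= j <= hi)%N ->
  q j = padd (q lo) (pscale (j%:Z - lo%:Z) d).
Hypothesis HselI : forall i, selI i -> (lo <= i <= N)%N.
Hypothesis Hhi : (N + count selI (iota 0 N.+1) <= hi)%N.

Local Notation ph := (phi e).
Let sel := fun p => selI (absz (ph p)).
Let Hrep := proj1 HP.

Lemma q_node j : (j <= N)%N -> q j \in nodes S /\ ph (q j) = j%:Z.
Proof.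
move=> jN; have [r rn rE] := rep_surj Hrep (i := j%:Z) ltac:(lia).
have := proj2 HP r rn; rewrite rE /= => <-; by [].
Qed.

Lemma ps_sel p : p \in nodes S -> sel p -> (padd p d \in nodes S) \/ ph p = N%:Z.
Proof.
move=> pn sp; have Hr := r_range Hrep pn; have := HselI sp => Hb.
have pE := proj2 HP p pn.
case: (ltnP (absz (ph p)) N) => H; last by right; lia.
left.
have -> : padd p d = q (absz (ph p)).+1.
  have pq : p = padd (q lo) (pscale ((absz (ph p))%:Z - lo%:Z) d).
    by rewrite {1}pE; apply: Hline; lia.
  rewrite (Hline (j := (absz (ph p)).+1)); last by lia.
  rewrite {1}pq /padd /pscale /=; congr (_, _); rewrite -?addrA; congr (_ + _); lia.
by case: (q_node (j := (absz (ph p)).+1) H).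
Qed.

Lemma key P (k : int) : P = padd (q lo) (pscale k d) -> 0 <= k -> ph P <= hi%:Z ->
  P = q (absz (ph P)).
Proof.
move=> PE k0 Phi; have [_ qlo] := q_node Hlo.
have phP : ph P = lo%:Z + k by rewrite PE phiD phiZ Hd qlo mulr1.
rewrite (Hline (j := absz (ph P))); last by lia.
rewrite phP {1}PE; congr padd; congr pscale; lia.
Qed.

Lemma ps_step : exists S', step origin S S' /\
  Pre e q S' (N + count selI (iota 0 N.+1)) /\
  Pre e q (Defs.AC S') (N + count selI (iota 0 N.+1)).
Proof.
have Hsel := ps_sel.
set S' := end_shape S d (ops S sel) (disp e d S sel).
have R' : Rep e S' (N + count selI (iota 0 N.+1)).
  rewrite -(count_nodes selI Hrep); exact: gs_rep Hrep Hd Hsel Hud.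
suff NP : forall P, P \in nodes S' -> P = q (absz (ph P)).
  exists S'; split; first exact: (gs_step Hrep Hd Hsel Hud).
  by split; split => //; apply: rep_AC.
move=> P Pn; have PR := r_range R' Pn.
have Phi : ph P <= hi%:Z by move: PR Hhi; lia.
case: (nodes_cases Pn) => [[x xn PE]|[u /andP [un su] PE]].
  have xE := proj2 HP x xn.
  case c0: (cnt e S sel x == 0)%N.
    have PX : P = x.
      by rewrite PE /fpos /disp (eqP c0) /pscale /padd /= !mul0r !addr0; case: (x).
    by rewrite PX.
  have : has (fun r => sel r && (ph r < ph x)) (nodes S) by rewrite has_count lt0n c0.
  case/hasP => r rn /andP [sr rx].
  have := HselI sr; have := r_range Hrep rn; have := r_range Hrep xn => Hx Hr Hb.
  apply: (key (k := ((absz (ph x))%:Z - lo%:Z) + (cnt e S sel x)%:Z)) => //; last by lia.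
  rewrite PE /fpos /disp -padd_scale -(Hline (j := absz (ph x))) -?xE //; lia.
have uE := proj2 HP u un.
have := HselI su; have := r_range Hrep un => Hu Hb.
apply: (key (k := ((absz (ph u))%:Z - lo%:Z) + (cnt e S sel u)%:Z + 1)) => //; last by lia.
rewrite PE /fpos /disp {1}uE (Hline (j := absz (ph u))); last by lia.
rewrite /padd /pscale /=; congr (_, _); ring.
Qed.

End PS.


Lemma count_range lo x n :
  count (fun i => (lo <= i < lo + x)%N) (iota 0 n) = minn x (n - lo).
Proof.
elim: n => [|n IH]; first by rewrite /= minn0.
rewrite -addn1 iotaD count_cat IH /= add0n addn0.
case: (leqP lo n) => H /=; last lia.
case: (ltnP n (lo + x)) => H2 /=; lia.
Qed.

Definition Reach (adjm : bool) (e : point) (q : nat -> point) (N t : nat) : Prop :=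
  exists B E : nat -> gshape,
    [/\ B 0%N = seed,
        (forall t', (t' < t)%N -> step origin (B t') (E t') /\
           B t'.+1 = (if adjm then Defs.AC (E t') else E t')),
        Pre e q (B t) N &
        Pre e q (if t is t'.+1 then E t' else seed) N].

Lemma pre_node e q S N j : Pre e q S N -> (j <= N)%N -> q j \in nodes S /\ phi e (q j) = j%:Z.
Proof.
move=> HP jN; have [r rn rE] := rep_surj (proj1 HP) (i := j%:Z) ltac:(lia).
by have := proj2 HP r rn; rewrite rE /= => <-.
Qed.

Lemma pre_seed e q : q 0%N = origin -> Pre e q seed 0.
Proof.
move=> q0; split; last by move=> p /=; rewrite inE => /eqP ->; rewrite phi0.
split => //=.
- by move=> p; rewrite inE => /eqP ->; rewrite phi0.
- by move=> p r; rewrite !inE => /eqP -> /eqP ->.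
- move=> p r; rewrite /erel /= !inE.
  by case: (p =P origin) => [->|]; case: (r =P origin) => [->|] //=; rewrite phi0.
Qed.

Lemma reach0 adjm e q : q 0%N = origin -> Reach adjm e q 0 0.
Proof.
move=> q0; exists (fun _ => seed), (fun _ => seed); split => //; exact: pre_seed.
Qed.

Lemma reach_step adjm e q N N' t : Reach adjm e q N t ->
  (forall S, Pre e q S N -> exists S', step origin S S' /\ Pre e q S' N' /\ Pre e q (Defs.AC S') N') ->
  Reach adjm e q N' t.+1.
Proof.
move=> [B [E [B0 Hst HB HE]]] H.
have [S' [st [P1 P2]]] := H _ HB.
exists (fun i => if (i <= t)%N then B i else (if adjm then Defs.AC S' else S')),
       (fun i => if (i < t)%N then E i else S'); split => //=.
- move=> t' lt; case: (ltnP t' t) => H1.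
    by rewrite ltnW //; apply: Hst.
  have -> : t' = t by lia.
  by rewrite leqnn.
- by rewrite ltnn; case: (adjm).
- by rewrite ltnn.
Qed.

Section Run.
Variables (adjm : bool) (e d : point) (q : nat -> point) (N a : nat).
Hypothesis Hd : phi e d = 1.
Hypothesis Hud : unitv d.
Hypothesis Hunits : forall v, unitv v -> phi e v = 1 \/ phi e v = -1.
Hypothesis Hrun : forall i, (N <= i < N + a)%N -> q i.+1 = padd (q i) d.

Lemma line0 j : (j <= a)%N -> q (N + j)%N = padd (q N) (pscale j%:Z d).
Proof.
elim: j => [|j IH] ja.
  by rewrite addn0 /padd /pscale /=; case: (q N) => u v /=; congr (_, _); ring.
rewrite addnS Hrun; last lia.
rewrite IH; last lia.
rewrite /padd /pscale /=; congr (_, _); rewrite -[j.+1]addn1 PoszD; ring.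
Qed.

Lemma line lo j : (N <= lo)%N -> (lo <= j <= N + a)%N ->
  q j = padd (q lo) (pscale (j%:Z - lo%:Z) d).
Proof.
move=> H1 H2.
have [j' jE] : exists j', j = (N + j')%N by exists (j - N)%N; lia.
have [l' lE] : exists l', lo = (N + l')%N by exists (lo - N)%N; lia.
subst j lo.
rewrite !line0; try lia.
rewrite /padd /pscale /=; congr (_, _); rewrite !PoszD; ring.
Qed.

Lemma run_append t : (0 < a)%N -> Reach adjm e q N t -> Reach adjm e q N.+1 t.+1.
Proof.
move=> a0 R; apply: (reach_step R) => S HP.
have := @ps_step e d q S N N (N + 1) (fun i => (N <= i < N + 1)%N) HP Hd Hud Hunits (leqnn N).
rewrite count_range (_ : minn 1 (N.+1 - N) = 1%N); last by lia.
rewrite addn1; apply.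
- move=> j Hj; apply: line; lia.
- move=> i; lia.
- lia.
Qed.

Lemma run_extend t h : (0 < h < a)%N -> Reach adjm e q (N + h) t ->
  Reach adjm e q (N + h + minn h (a - h)) t.+1.
Proof.
move=> ha R; apply: (reach_step R) => S HP.
set x := minn h (a - h).
have := @ps_step e d q S (N + h) (N + h - x) (N + h + x)
  (fun i => (N + h - x <= i < N + h - x + x)%N) HP Hd Hud Hunits ltac:(lia).
rewrite count_range (_ : minn x ((N + h).+1 - (N + h - x)) = x); last by lia.
apply.
- move=> j Hj; apply: line; lia.
- move=> i; lia.
- lia.
Qed.

Lemma run_double ee : forall h t, (0 < h <= a)%N -> (a <= 2 ^ ee * h)%N ->
  Reach adjm e q (N + h) t -> exists2 t', (t' <= t + ee)%N & Reach adjm e q (N + a) t'.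
Proof.
elim: ee => [|ee IH] h t Hh Ha R.
  have -> : a = h by move: Ha Hh; rewrite expn0 mul1n; lia.
  by exists t => //; rewrite addn0.
case: (eqVneq h a) => [<-|hna]; first by exists t => //; lia.
have R' := run_extend (ltac:(lia) : (0 < h < a)%N) R.
have Ha' : (a <= 2 ^ ee * (h + minn h (a - h)))%N.
  have P0 : (0 < 2 ^ ee)%N by rewrite expn_gt0.
  rewrite /minn; case: ifP => _.
    by move: Ha; rewrite expnS mulnDr; nia.
  by rewrite subnKC; [rewrite leq_pmull|lia].
have [t' Ht' R''] := IH (h + minn h (a - h))%N t.+1 ltac:(lia) Ha' ltac:(by rewrite addnA).
by exists t' => //; lia.
Qed.

Lemma run_full t : (0 < a)%N -> Reach adjm e q N t ->
  exists2 t', (t' <= t + (trunc_log 2 a).+2)%N & Reach adjm e q (N + a) t'.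
Proof.
move=> a0 R; have R1 := run_append a0 R.
have Hlog := @trunc_log_ltn 2 a isT.
have [t' H1 H2] := @run_double (trunc_log 2 a).+1 1 t.+1 ltac:(lia)
  ltac:(rewrite muln1; exact: ltnW) ltac:(by rewrite addn1).
by exists t' => //; lia.
Qed.

End Run.

Section Runs.
Variables (adjm : bool) (e : point) (q : nat -> point) (M : nat) (W : nat -> point).
Hypothesis Hunits : forall v, unitv v -> phi e v = 1 \/ phi e v = -1.
Hypothesis HW : forall i, (i < M)%N -> unitv (W i) /\ phi e (W i) = 1.
Hypothesis Hq : forall i, (i < M)%N -> q i.+1 = padd (q i) (W i).

Definition Kc := (trunc_log 2 M).+2.
Definition ch N := count (fun i => W i.-1 != W i) (iota N.+1 (M - N.+1)).

Lemma runs_aux n : forall N t, (M - N <= n)%N -> (N <= M)%N -> Reach adjm e q N t ->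
  exists2 t', (t' <= t + (1 + ch N) * Kc)%N & Reach adjm e q M t'.
Proof.
elim: n => [|n IH] N t Hn NM R.
  have -> : M = N by lia.
  by exists t => //; rewrite leq_addr.
case: (eqVneq N M) => [E|NnM]; first by subst N; exists t => //; rewrite leq_addr.
pose P j := (0 < j)%N && ((M <= N + j)%N || (W (N + j) != W N)).
have exP : exists j, P j by exists (M - N)%N; rewrite /P; apply/andP; split; [lia|apply/orP; left; lia].
case: (ex_minnP exP) => a /andP [a0 Pa] amin.
have aM : (N + a <= M)%N.
  have : P (M - N)%N by rewrite /P; apply/andP; split; [lia|apply/orP; left; lia].
  move/amin; lia.
have inrun : forall j, (0 < j < a)%N -> W (N + j) = W N.
  move=> j Hj; case Pj : (P j); first by have := amin j Pj; lia.
  move: Pj; rewrite /P; case/andP: Hj => -> _ /= /norP [_]; by move/negPn/eqP.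
have [Hud Hd] := HW (ltac:(lia) : (N < M)%N).
have Hrun : forall i, (N <= i < N + a)%N -> q i.+1 = padd (q i) (W N).
  move=> i Hi; rewrite Hq; last lia.
  case: (eqVneq i N) => [->//|iN].
  have -> : i = (N + (i - N))%N by lia.
  by rewrite inrun //; lia.
have [t1 Ht1 R1] := run_full Hd Hud Hunits Hrun a0 R.
have Hlog : (trunc_log 2 a <= trunc_log 2 M)%N by apply: leq_trunc_log; lia.
case: (eqVneq (N + a)%N M) => [E|NaM].
  by exists t1; [rewrite /Kc; nia | rewrite -E].
have Wneq : W (N + a) != W N by move: Pa; rewrite (_ : (M <= N + a)%N = false) //; lia.
have [t' Ht' R'] := IH (N + a)%N t1 ltac:(lia) aM R1.
have Hch : (1 + ch (N + a) <= ch N)%N.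
  rewrite /ch.
  have -> : (M - N.+1 = (a - 1) + 1 + (M - (N + a).+1))%N by lia.
  rewrite !iotaD count_cat count_cat.
  have -> : (N.+1 + (a - 1) = N + a)%N by lia.
  have -> : (N.+1 + (a - 1 + 1) = (N + a).+1)%N by lia.
  rewrite /= addn0.
  have -> : W (N + a).-1 = W N.
    case: (eqVneq a 1%N) => [->|an1]; first by rewrite addn1.
    have -> : (N + a).-1 = (N + (a - 1))%N by lia.
    by apply: inrun; lia.
  by rewrite eq_sym Wneq; lia.
exists t' => //.
apply: (leq_trans Ht'); move: Ht1 Hch; rewrite /Kc; nia.
Qed.

End Runs.


Lemma bracket (s : seq nat) m : sorted ltn s ->
  (exists2 x, x \in s & (x <= m)%N) -> (exists2 y, y \in s & (m < y)%N) ->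
  exists kk, (kk.+1 < size s)%N /\ (nth 0 s kk <= m < nth 0 s kk.+1)%N.
Proof.
elim: s => [|x s IH]; first by move=> _ [].
rewrite /=.
move=> Hs [z zin zm] [y yin my].
have Hmin : forall w, w \in s -> (x < w)%N.
  move=> w win; have := order_path_min ltn_trans Hs; move/allP; exact.
case: (leqP x m) => xm.
  case: s IH Hs Hmin yin {zin} => [|u s'] IH Hs Hmin yin.
    by move: yin; rewrite inE => /eqP E; lia.
  case: (ltnP m u) => mu; first by exists 0%N; split => //=; lia.
  have Hs' : sorted ltn (u :: s') by move: Hs => /= /andP [].
  have [kk [H1 H2]] := IH Hs' (ex_intro2 _ _ u (mem_head u s') mu)
    ltac:(case/orP: (yin) => [/eqP E|yin']; [lia|by exists y]).
  by exists kk.+1; split => //=.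
exfalso; case/orP: zin => [/eqP E|zin]; first lia.
by have := Hmin z zin; lia.
Qed.

Lemma perp_negl a b : perp (psub origin a) b = perp a b.
Proof.
rewrite /perp /psub /origin /=.
have -> : (0 - a.1) * b.1 + (0 - a.2) * b.2 = - (a.1 * b.1 + a.2 * b.2) by ring.
by rewrite oppr_eq0.
Qed.

Lemma perp_sym a b : perp a b = perp b a.
Proof. by rewrite /perp mulrC [a.2 * _]mulrC. Qed.

Section Main.
Variables (S : gshape) (s : seq point) (d1 d2 : point).
Hypothesis Hs0 : s != [::].
Hypothesis Hd1 : unitv d1.
Hypothesis Hd2 : unitv d2.
Hypothesis Hperp : perp d1 d2.
Let tp := turning_points s.
Hypothesis Hst : forall kk, (kk.+1 < size tp)%N ->
  forall m, (nth 0%N tp kk <= m < nth 0%N tp kk.+1)%N ->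
    psub (at_ s m.+1) (at_ s m) = (if odd kk then d2 else d1).

Let M := (size s).-1.
Definition Wf (i : nat) := psub (at_ s i.+1) (at_ s i).

Lemma size_s : size s = M.+1.
Proof. by rewrite /M; case: (s) Hs0. Qed.

Lemma W_letter m : (m < M)%N -> Wf m = d1 \/ Wf m = d2.
Proof.
move=> mM.
have Hsort : sorted ltn tp.
  by rewrite /tp /turning_points; apply: sorted_filter; [exact: ltn_trans | exact: iota_ltn_sorted].
have H0 : 0%N \in tp by rewrite /tp /turning_points mem_filter mem_iota size_s /turning eqxx.
have HM : M \in tp.
  rewrite /tp /turning_points mem_filter mem_iota size_s /turning.
  by rewrite (_ : (size s).-1 = M) // eqxx orbT /=; lia.
have [kk [H1 H2]] := bracket Hsort (ex_intro2 _ _ 0%N H0 (leq0n m)) (ex_intro2 _ _ M HM mM).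
have := Hst H1 H2; rewrite -/(Wf m); case: (odd kk) => ->; auto.
Qed.

Lemma turn_change i : (0 < i < M)%N -> Wf i.-1 != Wf i -> turning s i.
Proof.
move=> Hi Hne; apply/orP; right.
have E : psub (at_ s i.-1) (at_ s i) = psub origin (Wf i.-1).
  rewrite /Wf (_ : i.-1.+1 = i); last lia.
  by rewrite /psub /origin /=; congr (_, _); ring.
rewrite E perp_negl -/(Wf i).
have := W_letter (ltac:(lia) : (i.-1 < M)%N); have := W_letter (ltac:(lia) : (i < M)%N).
case=> Ei; case=> Ej; move: Hne; rewrite Ei Ej ?eqxx //= => _.
by rewrite perp_sym.
Qed.

Lemma count_bound : (1 + ch M Wf 0 <= size tp)%N.
Proof.
rewrite /tp /turning_points size_filter size_s /ch.
rewrite (_ : iota 0 M.+1 = 0%N :: iota 1 M) //= leq_add2l.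
have E : iota 1 M = iota 1 (M - 1) ++ iota (1 + (M - 1)) (M - (M - 1)).
  by rewrite -iotaD; congr iota; lia.
rewrite E count_cat.
have H1 : (count (fun i => Wf i.-1 != Wf i) (iota 1 (M - 1)) <=
           count (turning s) (iota 1 (M - 1)))%N.
  rewrite (@eq_in_count _ _ (fun i => (0 < i < M)%N && (Wf i.-1 != Wf i))).
    by apply: sub_count => i /andP [Hi Hne]; exact: turn_change.
  by move=> i; rewrite mem_iota => Hi /=; rewrite (_ : (0 < i < M)%N = true) //; lia.
exact: leq_trans H1 (leq_addr _ _).
Qed.

End Main.

Lemma zipP (T : eqType) (x0 : T) (s : seq T) x y :
  reflect (exists2 i, (i.+1 < size s)%N & (x = nth x0 s i /\ y = nth x0 s i.+1))
          ((x, y) \in zip s (behead s)).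
Proof.
elim: s => [|a s IH]; first by apply: (iffP idP) => //; case.
case: s IH => [|b s] IH; first by apply: (iffP idP) => //; case.
rewrite /= in_cons; apply: (iffP orP).
  case=> [/eqP [-> ->]|/IH [i Hi [-> ->]]]; first by exists 0%N.
  by exists i.+1.
case=> [[|i]] /= Hi [Ex Ey]; first by left; rewrite Ex Ey.
by right; apply/IH; exists i => //; rewrite Ex Ey.
Qed.

Definition qf (s : seq point) (i : nat) := psub (at_ s i) (at_ s 0).

Lemma psubK' a b : padd (psub a b) b = a.
Proof. case: a => a1 a2; rewrite /padd /psub /=; congr (_, _); ring. Qed.
Lemma paddK' p v : psub (padd p v) v = p.
Proof. case: p => a1 a2; rewrite /padd /psub /=; congr (_, _); ring. Qed.

Lemma final_same e T S s M : size s = M.+1 -> Pre e (qf s) T M -> path_of S s ->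
  same_shape T S.
Proof.
move=> Hsz HP [Hs0 Hperm Her].
have R := proj1 HP.
have fw : forall p p', p \in nodes T -> p' \in nodes T -> phi e p' = phi e p + 1 ->
    (padd p (at_ s 0), padd p' (at_ s 0)) \in zip s (behead s).
  move=> p p' pn pn' E; have := r_range R pn; have := r_range R pn' => H1 H2.
  rewrite (proj2 HP p pn) (proj2 HP p' pn') /qf !psubK'.
  apply/(zipP origin); exists (absz (phi e p)); first by rewrite Hsz; lia.
  by split => //; rewrite /at_; congr nth; lia.
have bw : forall p p', (padd p (at_ s 0), padd p' (at_ s 0)) \in zip s (behead s) ->
    [/\ p \in nodes T, p' \in nodes T & phi e p' = phi e p + 1].
  move=> p p' /(zipP origin) [i Hi [E1 E2]].
  have pE : p = qf s i by rewrite /qf {1}/at_ -E1 paddK'.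
  have pE' : p' = qf s i.+1 by rewrite /qf {1}/at_ -E2 paddK'.
  have Hi' : (i.+1 < M.+1)%N by rewrite -Hsz.
  have [n1 f1] := pre_node HP (ltac:(lia) : (i <= M)%N).
  have [n2 f2] := pre_node HP (ltac:(lia) : (i.+1 <= M)%N).
  by rewrite pE pE' f1 f2; split => //; rewrite -addn1 PoszD.
exists (at_ s 0); split.
  move=> p; rewrite -(perm_mem Hperm); apply/idP/idP.
    move=> pn; have := r_range R pn => Hr.
    rewrite (proj2 HP p pn) /qf psubK' /at_ mem_nth // Hsz; lia.
  move=> H; set i := index (padd p (at_ s 0)) s.
  have Hi : (i < size s)%N by rewrite index_mem.
  have pE : p = qf s i by rewrite /qf /at_ nth_index // paddK'.
  by rewrite pE; case: (pre_node HP (ltac:(lia) : (i <= M)%N)).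
move=> p p'; rewrite Her (r_erel R); apply/idP/idP.
  case/and3P => pn pn' /orP [/eqP E|/eqP E].
    by rewrite (fw p p').
  by rewrite (fw p' p) ?orbT.
case/orP => [/bw [-> -> ->]|/bw [-> -> ->]]; by rewrite eqxx ?orbT.
Qed.


Lemma main_adjm (k : nat) (S : gshape) (s : seq point) (adjm : bool) :
  path_of S s -> staircase s -> (size (turning_points s) <= k)%N ->
  exists tf : nat, (tf <= (2 * k) * (trunc_log 2 (size (nodes S))).+1)%N /\ grows_in adjm S tf.
Proof.
move=> Hpath [d1 [d2 [/and3P [u1 u2 pp] Hst]]] Hk.
have Hpath' := Hpath; case: Hpath' => Hs0 Hperm Her.
set M := (size s).-1.
have Hsz : size s = M.+1 by rewrite /M; case: (s) Hs0.
have [h1 [h2 hu]] := phi_d u1 u2 pp.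
set e := padd d1 d2.
have HW : forall i, (i < M)%N -> unitv (Wf s i) /\ phi e (Wf s i) = 1.
  move=> i iM; case: (W_letter Hs0 u1 u2 pp Hst iM) => ->; by split.
have Hq : forall i, (i < M)%N -> qf s i.+1 = padd (qf s i) (Wf s i).
  move=> i _; rewrite /qf /Wf /psub /padd /=; congr (_, _); ring.
have q0 : qf s 0 = origin by rewrite /qf /psub /origin /= !subrr.
have R0 := reach0 adjm e q0.
have [t' Ht' [B [E [B0 Hs HB HE]]]] :=
  runs_aux (n := M) (N := 0) (t := 0) hu HW Hq ltac:(lia) (leq0n M) R0.
have Hc := count_bound Hs0 u1 u2 pp Hst.
exists t'; split.
  have Hn : size (nodes S) = M.+1 by rewrite -(perm_size Hperm).
  rewrite Hn; apply: (leq_trans Ht'); rewrite add0n /Kc.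
  have Hl : (trunc_log 2 M <= trunc_log 2 M.+1)%N by apply: leq_trunc_log.
  rewrite -/M in Hc; nia.
exists B, E; split => //; split => //.
exact: final_same Hsz HE Hpath.
Qed.

Local Close Scope ring_scope.

Theorem corollary5p1 :
  forall k : nat, exists C : nat,
    forall S : gshape,
      wf_shape S ->
      (exists s : seq point,
          [/\ path_of S s, staircase s & (size (turning_points s) <= k)%N]) ->
      (exists tf : nat,
          (tf <= C * (trunc_log 2 (size (nodes S))).+1)%N /\ grows_in false S tf) /\
      (exists tf : nat,
          (tf <= C * (trunc_log 2 (size (nodes S))).+1)%N /\ grows_in true S tf).
Proof.
move=> k; exists (2 * k)%N => S _ [s [Hp Hst Hk]].
by split; apply: main_adjm Hp Hst Hk.
Qed.
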